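(* Let $h$ be a non-degenerate symmetric $(0,2)$-tensor field and let $J_1,J_2$ be $h$-symmetric $(1,1)$-tensor fields on a smooth manifold $M$ such that $J_1J_2=J_2J_1$ and $(J_1-J_2)^2=0$. Define endomorphisms of $TM\oplus T^*M$ by $\hat J_-(X+\eta)=J_1X-(J_1^2+I)h^{-1}(\eta)+h(X)-J_1^*\eta$ and $\hat J_+(X+\eta)=J_2X-(J_2^2-I)h^{-1}(\eta)+h(X)-J_2^*\eta$. Then $\hat J_-^2=-I$, $\hat J_+^2=I$ and $\hat J_-\hat J_+=-\hat J_+\hat J_-$, so that $(\hat J_-,\hat J_+,\hat J_-\hat J_+)$ is a generalized almost para-quaternionic structure on $M$.
   Context: $h$ is viewed as the isomorphism $TM\to T^*M$, $X\mapsto h(X,\cdot)$, with inverse $h^{-1}$; $(J^*\eta)(X)=\eta(JX)$; $J$ is $h$-symmetric if $h(JX,Y)=h(X,JY)$. *)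

(* Defs.v *)
(* Pointwise (fibrewise) linear algebra on T_pM ⊕ T_p^*M,
   with T_pM identified with column vectors 'cV[R]_n via a basis and T_p^*M
   with column vectors of coefficients in the dual basis. *)
From HB Require Import structures.
From mathcomp Require Import all_boot all_order all_algebra.
From mathcomp Require Import reals.
Set Implicit Arguments. Unset Strict Implicit. Unset Printing Implicit Defensive.
Import GRing.Theory Num.Theory.
Local Open Scope ring_scope.

(* A (0,2)-tensor h at a point is a matrix: h(X,Y) = X^T h Y. *)
Definition pilot_symmetric (R : realType) n (h : 'M[R]_n) : Prop := h^T = h.
Definition pilot_nondegenerate (R : realType) n (h : 'M[R]_n) : Prop := h \in unitmx.

Definition pilot_h_symmetric (R : realType) n (h J : 'M[R]_n) : Prop :=
  forall X Y : 'cV[R]_n, (J *m X)^T *m h *m Y = X^T *m h *m (J *m Y).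

(* The endomorphism of T M ⊕ T^* M (block column vector [X; eta])
     X + eta |-> (J X - (J^2 + eps I) h^{-1}(eta)) + (h(X) - J^* eta),
   where h(X) = h *m X (the covector h(X,.)), h^{-1} = invmx h,
   and J^* eta = J^T *m eta (since (J^* eta)(X) = eta(JX)). *)
Definition Jhat (R : realType) n (eps : R) (h J : 'M[R]_n) : 'M[R]_(n + n) :=
  block_mx J (- ((J *m J + eps%:M) *m invmx h)) h (- J^T).

Definition Jminus (R : realType) n (h J1 : 'M[R]_n) := Jhat 1 h J1.
Definition Jplus (R : realType) n (h J2 : 'M[R]_n) := Jhat (-1) h J2.

Definition gen_almost_paraquaternionic (R : realType) m (I1 I2 I3 : 'M[R]_m) : Prop :=
  [/\ I1 *m I1 = - 1%:M, I2 *m I2 = 1%:M, I1 *m I2 = - (I2 *m I1)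
    & I3 = I1 *m I2].

(* Main.v *)
Require Import Defs.
From HB Require Import structures.
From mathcomp Require Import all_boot all_order all_algebra.
From mathcomp Require Import reals.
From mathcomp Require Import ssrAC.
Import GRing.Theory Num.Theory.
Local Open Scope ring_scope.

Lemma sq_blocks (Rg : pzRingType) (h H J E : Rg) : H*h = 1 -> h*H = 1 -> (forall X, E*X = X*E) ->
 [/\ J*J + -((J*J+E)*H)*h = -E,
     J * -((J*J+E)*H) + -((J*J+E)*H) * -(h*J*H) = 0,
     h*J + -(h*J*H)*h = 0 &
     h * -((J*J+E)*H) + -(h*J*H) * -(h*J*H) = -E].
Proof.
move=> Hh hH cE; split.
- by rewrite mulNr -mulrA Hh mulr1 opprD addrA subrr add0r.
- rewrite mulrNN mulrN !mulrA -(mulrA _ H h) Hh mulr1.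
  by rewrite mulrDr !mulrDl !mulrA -cE addNr.
- by rewrite mulNr -!mulrA Hh mulr1 subrr.
- rewrite mulrNN mulrN !mulrA -(mulrA (h * J) H h) Hh mulr1 !mulrDr !mulrDl !mulrA.
  rewrite -cE -(mulrA _ h H) hH mulr1 opprD.
  by rewrite addrC addrA subrr add0r.
Qed.

Lemma core (Rg : pzRingType) (A B e1 e2 : Rg) : e1 + e2 = 0 -> A*B = B*A -> (A-B)*(A-B) = 0 ->
  A*B - (A*A+e1) = -(A*B - (B*B+e2)).
Proof.
move=> hE cAB hAB.
have -> : e2 = - e1 by apply/eqP; rewrite -addr_eq0 addrC hE.
rewrite mulrBl !mulrBr -cAB in hAB.
move: (A*A) (A*B) (B*B) hAB => a b c hAB.
apply/eqP; rewrite -subr_eq0; apply/eqP.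
rewrite -oppr0 -hAB.
rewrite !opprD !opprK !addrA.
by rewrite [LHS](ACl (6*3*2*1*4*5)) /= subrr add0r.
Qed.

Lemma anti_blocks (Rg : pzRingType) (h H A B e1 e2 : Rg) : H*h = 1 -> h*H = 1 ->
  (forall X, e1*X = X*e1) -> (forall X, e2*X = X*e2) -> e1 + e2 = 0 ->
  A*B = B*A -> (A-B)*(A-B) = 0 ->
[/\ A*B + -((A*A+e1)*H)*h = -(B*A + -((B*B+e2)*H)*h),
    A * -((B*B+e2)*H) + -((A*A+e1)*H) * -(h*B*H) = -(B * -((A*A+e1)*H) + -((B*B+e2)*H) * -(h*A*H)),
    h*B + -(h*A*H)*h = -(h*A + -(h*B*H)*h) &
    h * -((B*B+e2)*H) + -(h*A*H) * -(h*B*H) = -(h * -((A*A+e1)*H) + -(h*B*H) * -(h*A*H))].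
Proof.
move=> Hh hH c1 c2 hE cAB hAB.
have Hh' : forall X, X*H*h = X by move=> X; rewrite -mulrA Hh mulr1.
have K := @core _ _ _ _ _ hE cAB hAB.
split.
- by rewrite !mulNr !Hh' -cAB K.
- rewrite !mulrNN !mulrN !mulrA !Hh' -!mulNr -!mulrDl -mulNr; congr (_ * H).
  rewrite !mulrDr !mulrDl !mulrA -c1 -c2.
  rewrite !mulNr !mulrN.
  have -> : B*A*A = A*A*B by rewrite -cAB -mulrA -cAB mulrA.
  have -> : B*B*A = A*B*B by rewrite -mulrA -cAB mulrA -cAB.
  by rewrite !opprD !opprK !addrA [LHS](ACl (3*4*1*2)).
- by rewrite !mulNr !Hh' opprB.
- transitivity (h*(-(B*B+e2) + A*B)*H).
    by rewrite ?mulrNN ?mulrN ?mulNr ?mulrA ?Hh' ?mulrDr ?mulrDl ?mulrN ?mulNr ?mulrA ?opprD ?mulrDr ?mulrDl ?mulrA ?opprD.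
  transitivity (-(h*(-(A*A+e1) + B*A)*H)).
    rewrite -mulNr -mulrN.
    have E : -(B*B+e2) + A*B = -(-(A*A+e1) + B*A).
      by rewrite -cAB addrC [-(A*A+e1) + _]addrC K opprK.
    by rewrite E.
  by rewrite ?mulrNN ?mulrN ?mulNr ?mulrA ?Hh' ?mulrDr ?mulrDl ?mulrN ?mulNr ?mulrA ?opprD ?mulrDr ?mulrDl ?mulrA ?opprD.
Qed.

Lemma bilin_eq (R : realType) n (A B : 'M[R]_n) :
  (forall X Y : 'cV[R]_n, X^T *m A *m Y = X^T *m B *m Y) -> A = B.
Proof.
move=> H; apply/matrixP=> i j.
have := H (delta_mx i 0) (delta_mx j 0).
rewrite trmx_delta => /matrixP /(_ 0 0).
by rewrite -!rowE -!colE !mxE.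
Qed.

Lemma JT (R : realType) n (h J : 'M[R]_n) : h \in unitmx ->
  pilot_h_symmetric h J -> J^T = h *m J *m invmx h.
Proof.
move=> hu hs.
have e : J^T *m h = h *m J.
  apply: bilin_eq => X Y; by rewrite !mulmxA -trmx_mul hs !mulmxA.
by rewrite -e -mulmxA mulmxV // mulmx1.
Qed.

Lemma sN (R : realType) n (a : R) : (-a)%:M = -(a%:M) :> 'M[R]_n.
Proof. by apply/matrixP=> i j; rewrite !mxE mulNrn. Qed.

Lemma Jhat_sq (R : realType) n (eps : R) (h J : 'M[R]_n) : h \in unitmx ->
  J^T = h *m J *m invmx h -> Jhat eps h J *m Jhat eps h J = - eps%:M.
Proof.
move=> hu hT; rewrite /Jhat mulmx_block hT scalar_mx_block opp_block_mx oppr0.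
have Hh := mulVmx hu; have hH := mulmxV hu.
have cE : forall A : 'M[R]_n, eps%:M *m A = A *m eps%:M by move=> A; rewrite scalar_mxC.
rewrite !mulmxE in Hh hH cE *.
have [s1 s2 s3 s4] := @sq_blocks _ _ _ J _ Hh hH cE.
by rewrite s1 s2 s3 s4.
Qed.

Lemma Jhat_anti (R : realType) n (h A B : 'M[R]_n) : h \in unitmx ->
  A^T = h *m A *m invmx h -> B^T = h *m B *m invmx h ->
  A *m B = B *m A -> (A - B) *m (A - B) = 0 ->
  Jhat 1 h A *m Jhat (-1) h B = - (Jhat (-1) h B *m Jhat 1 h A).
Proof.
move=> hu hA hB cAB hAB; rewrite /Jhat !mulmx_block hA hB opp_block_mx.
have Hh := mulVmx hu; have hH := mulmxV hu.
have c1 : forall X : 'M[R]_n, (1:R)%:M *m X = X *m (1:R)%:M by move=> X; rewrite scalar_mxC.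
have c2 : forall X : 'M[R]_n, (-1:R)%:M *m X = X *m (-1:R)%:M by move=> X; rewrite scalar_mxC.
have hE : (1:R)%:M + (-1:R)%:M = 0 :> 'M[R]_n by rewrite sN addrN.
rewrite !mulmxE in Hh hH c1 c2 cAB hAB *.
have [s1 s2 s3 s4] := @anti_blocks _ _ _ _ _ _ _ Hh hH c1 c2 hE cAB hAB.
by rewrite s1 s2 s3 s4.
Qed.

Theorem proposition3p1 (R : realType) (n : nat) (h J1 J2 : 'M[R]_n) :
  pilot_symmetric h -> pilot_nondegenerate h ->
  pilot_h_symmetric h J1 -> pilot_h_symmetric h J2 ->
  J1 *m J2 = J2 *m J1 ->
  (J1 - J2) *m (J1 - J2) = 0 ->
  [/\ Jminus h J1 *m Jminus h J1 = - 1%:M,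
      Jplus h J2 *m Jplus h J2 = 1%:M,
      Jminus h J1 *m Jplus h J2 = - (Jplus h J2 *m Jminus h J1)
    & gen_almost_paraquaternionic (Jminus h J1) (Jplus h J2)
        (Jminus h J1 *m Jplus h J2)].
Proof.
move=> _ hu h1 h2 c12 n12.
have t1 := @JT _ _ h J1 hu h1; have t2 := @JT _ _ h J2 hu h2.
have e1 : Jminus h J1 *m Jminus h J1 = - 1%:M by exact: Jhat_sq.
have e2 : Jplus h J2 *m Jplus h J2 = 1%:M by rewrite /Jplus (@Jhat_sq _ _ _ h J2 hu t2) sN opprK.
have e3 : Jminus h J1 *m Jplus h J2 = - (Jplus h J2 *m Jminus h J1) by exact: Jhat_anti.
by split => //; split.
Qed.
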